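(* Let $M$ be a finite monoid. Every filtered left $M$-set is isomorphic (as a left $M$-set) to $M/K$ for a suitable saturated $F$-submonoid $K$ of $M$.
   Context: A left $M$-set $A$ is filtered if (F1) $A\neq\emptyset$; (F2) if $m_1a=m_2a$ ($m_i\in M,a\in A$) then there are $m\in M,\tilde a\in A$ with $m\tilde a=a$, $m_1m=m_2m$; (F3) for $a_1,a_2\in A$ there are $m_1,m_2\in M$, $a\in A$ with $m_ia=a_i$. A monoid $K$ is an $F$-monoid if for any $m,n\in K$ there exists $x\in K$ with $mx=nx$; an $F$-submonoid is a submonoid that is an $F$-monoid. A submonoid $K\subseteq M$ is saturated if whenever $m\in M$ and $mx=x$ for some $x\in K$, then $m\in K$. For an $F$-submonoid $K$, $M/K$ is the quotient of $M$ by the equivalence relation $m\sim_K n\iff \exists x\in K: mx=nx$, with left $M$-action induced by left multiplication. *)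

(* Defs.v *)
From mathcomp Require Import all_boot.
Set Implicit Arguments. Unset Strict Implicit. Unset Printing Implicit Defensive.

Record finMonoid := FinMonoid {
  mcar :> finType;
  mmul : mcar -> mcar -> mcar;
  mone : mcar;
  mmulA : forall x y z, mmul x (mmul y z) = mmul (mmul x y) z;
  mmul1m : forall x, mmul mone x = x;
  mmulm1 : forall x, mmul x mone = x }.

Section Defs.
Variable M : finMonoid.
Local Notation "x * y" := (mmul x y).
Local Notation "1" := (mone M).

Definition is_left_action (A : Type) (act : M -> A -> A) : Prop :=
  (forall a, act 1 a = a) /\ (forall m n a, act (m * n) a = act m (act n a)).

(* Filtered left M-sets, axioms (F1)-(F3). *)
Definition filtered (A : Type) (act : M -> A -> A) : Prop :=
  [/\ (exists a : A, True),
      (forall (m1 m2 : M) (a : A), act m1 a = act m2 a ->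
         exists (m : M) (a' : A), act m a' = a /\ m1 * m = m2 * m)
    & (forall a1 a2 : A, exists (m1 m2 : M) (a : A),
         act m1 a = a1 /\ act m2 a = a2)].

Definition submonoid (K : {set M}) : Prop :=
  1 \in K /\ (forall x y, x \in K -> y \in K -> x * y \in K).

Definition F_submonoid (K : {set M}) : Prop :=
  submonoid K /\ (forall m n, m \in K -> n \in K -> exists2 x, x \in K & m * x = n * x).

Definition saturated (K : {set M}) : Prop :=
  forall m x : M, x \in K -> m * x = x -> m \in K.

Definition simK (K : {set M}) (m n : M) : bool := [exists x in K, m * x == n * x].
Definition clsK (K : {set M}) (m : M) : {set M} := [set n | simK K m n].

Definition quotK (K : {set M}) := {C : {set M} | C \in [set clsK K m | m : M]}.

Lemma clsK_in (K : {set M}) (m : M) : clsK K m \in [set clsK K m | m : M].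
Proof. by apply/imsetP; exists m. Qed.

Definition qclass (K : {set M}) (m : M) : quotK K := exist _ (clsK K m) (clsK_in K m).

Definition qrepr (K : {set M}) (C : quotK K) : M := odflt 1 [pick n in val C].

Definition qact (K : {set M}) (m : M) (C : quotK K) : quotK K :=
  qclass K (m * qrepr C).

End Defs.

(* Main.v *)
Require Import Defs.
From mathcomp Require Import all_boot.
From Stdlib Require ClassicalEpsilon.
Import (notations) ClassicalEpsilon.

Set Implicit Arguments. Unset Strict Implicit. Unset Printing Implicit Defensive.

Definition dec (P : Prop) : bool := if ClassicalEpsilon.excluded_middle_informative P then true else false.
Lemma decP (P : Prop) : reflect P (dec P).
Proof. rewrite /dec; case: ClassicalEpsilon.excluded_middle_informative => H; by constructor. Qed.

Section Main.
Variable M : finMonoid.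
Variable A : Type.
Variable act : M -> A -> A.
Hypothesis Hact : is_left_action act.
Hypothesis Hfilt : filtered act.
Local Notation "x * y" := (mmul x y).

Definition Sc (c b : A) : {set M} := [set m | dec (act m c = b)].
Lemma inSc c b m : (m \in Sc c b) <-> act m c = b.
Proof. rewrite inE; split; by move/decP. Qed.

Definition I (c : A) : {set {set M}} := [set Sc c (act m c) | m : M].

Lemma Sc_inj c b b' m : Sc c b = Sc c b' -> act m c = b -> b = b'.
Proof. move=> E H. have : m \in Sc c b by apply/inSc. by rewrite E => /inSc <-. Qed.

Lemma Ile a c p : a = act p c -> #|I a| <= #|I c| /\
  (#|I a| = #|I c| -> forall m, exists n, act m c = act n a).
Proof.
move=> Ha.
have [_ HM] := Hact.
pose h (S : {set M}) := Sc c (act (odflt (mone M) [pick m in S]) a).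
have hE : forall m, h (Sc a (act m a)) = Sc c (act m a).
  move=> m; rewrite /h; case: pickP => [n /inSc -> // | H].
  by have := H m; move/negbT/negP; case; apply/inSc.
have sub : h @: I a \subset I c.
  apply/subsetP => S /imsetP [T /imsetP [m _ ->] ->].
  rewrite hE; apply/imsetP; exists (m * p) => //. by rewrite HM -Ha.
have inj : {in I a &, injective h}.
  move=> S T /imsetP [m _ ->] /imsetP [n _ ->]; rewrite !hE => E.
  have := Sc_inj E (m:=m * p); rewrite HM -Ha => /(_ erefl) ->; done.
have cardE := card_in_imset inj.
split; first by rewrite -cardE; apply: subset_leq_card.
move=> Eq m.
have Eq' : #|h @: I a| = #|I c| by rewrite cardE.
have /(subset_cardP Eq') E := sub.
have : Sc c (act m c) \in h @: I a by rewrite E; apply/imsetP; exists m.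
case/imsetP => S /imsetP [n _ ->]; rewrite hE => E2.
exists n; exact: (Sc_inj E2 (m:=m)).
Qed.

Lemma gen_exists : exists a0, forall b, exists m, act m a0 = b.
Proof.
have [[a _] _ F3] := Hfilt.
pose P k := dec (exists a, #|I a| = k).
have exP : exists k, P k by exists #|I a|; apply/decP; exists a.
have bnd : forall k, P k -> k <= #|{set M}|.
  by move=> k /decP [b <-]; apply: max_card.
case: (ex_maxnP exP bnd) => k /decP [a0 Ha0] kmax.
exists a0 => b.
have [m1 [m2 [c [E1 E2]]]] := F3 a0 b.
have [le1 eq1] := Ile (esym E1).
have lek : #|I c| <= k by apply: kmax; apply/decP; exists c.
have EE : #|I a0| = #|I c| by apply/eqP; rewrite eqn_leq le1 Ha0 lek.
have [n En] := eq1 EE m2.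
by exists n; rewrite -En.
Qed.

End Main.

Theorem theorem3p12 (M : finMonoid) (A : Type) (act : M -> A -> A) :
  is_left_action act -> filtered act ->
  exists K : {set M}, [/\ F_submonoid K, saturated K &
    exists f : A -> quotK K, bijective f /\
      (forall (m : M) (a : A), f (act m a) = qact m (f a))].
Proof.
move=> Hact Hfilt.
have [H1 HM] := Hact.
have [_ F2 _] := Hfilt.
have [a0 gen] := gen_exists Hact Hfilt.
pose K := [set m : M | dec (act m a0 = a0)].
have inK : forall m, m \in K <-> act m a0 = a0.
  by move=> m; rewrite inE; split => /decP.
have simP : forall m n, reflect (act m a0 = act n a0) (simK K m n).
  move=> m n; apply: (iffP idP).
    case/existsP => x /andP [/inK Hx /eqP E].
    by rewrite -Hx -!HM E.
  move=> E; have [p [a' [Ea' Ep]]] := F2 _ _ _ E.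
  have [q Eq] := gen a'.
  apply/existsP; exists (mmul p q); apply/andP; split.
    by apply/inK; rewrite HM Eq Ea'.
  by rewrite !mmulA Ep.
have clsP : forall m n, act m a0 = act n a0 -> qclass K m = qclass K n.
  move=> m n E; apply: val_inj => /=; apply/setP => k; rewrite !inE.
  by apply/simP/simP => <-.
have reprE : forall m, act (qrepr (qclass K m)) a0 = act m a0.
  move=> m; rewrite /qrepr /=; case: pickP => [n /= | H].
    by rewrite inE => /simP ->.
  by have := H m; rewrite /= inE; move/negbT/negP; case; apply/simP.
pose mb (b : A) := proj1_sig (ClassicalEpsilon.constructive_indefinite_description _ (gen b)).
have mbE : forall b, act (mb b) a0 = b.
  by move=> b; rewrite /mb; case: ClassicalEpsilon.constructive_indefinite_description.
exists K; split.
- split; first split.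
  + by apply/inK.
  + by move=> x y /inK Hx /inK Hy; apply/inK; rewrite HM Hy Hx.
  move=> m n /inK Hm /inK Hn.
  have : simK K m n by apply/simP; rewrite Hm Hn.
  by case/existsP => x /andP [Hx /eqP E]; exists x.
- move=> m x /inK Hx E; apply/inK; by rewrite -{1}Hx -HM E.
exists (fun b => qclass K (mb b)); split.
  exists (fun C => act (qrepr C) a0).
    by move=> b /=; rewrite reprE mbE.
  case=> S HS; have /imsetP [m _ Em] := HS.
  have -> : exist _ S HS = qclass K m by apply: val_inj.
  by apply: clsP; rewrite mbE reprE.
move=> m b /=; rewrite /qact; apply: clsP.
by rewrite mbE HM reprE mbE.
Qed.
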